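(* Let $\mathcal{P}$ be an arbitrary LS-packing of $n>1$ unit diameter disks in $\mathbb{E}^2$. Then $c(\mathcal{P})\leq\lfloor 2n-2\sqrt{n}\rfloor$.
   Context: A packing of disks in $\mathbb{E}^2$ is a family of disks with pairwise disjoint interiors. A packing is totally separable (a TS-packing) if any two of its disks can be separated by a line that is disjoint from the interior of every disk of the packing. A packing $\mathcal{P}$ is locally separable (an LS-packing) if each disk of $\mathcal{P}$ together with the disks of $\mathcal{P}$ tangent to it form a TS-packing. The contact number $c(\mathcal{P})$ is the number of unordered pairs of disks of $\mathcal{P}$ tangent to each other. *)

(* Defs.v *)
From HB Require Import structures.
From mathcomp Require Import all_boot all_order all_algebra.
From mathcomp Require Import reals.
Set Implicit Arguments. Unset Strict Implicit. Unset Printing Implicit Defensive.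
Import Order.TTheory GRing.Theory Num.Theory.
Local Open Scope ring_scope.

Section Disks.
Variable R : realType.

Definition sqdist (p q : R * R) : R := (p.1 - q.1) ^+ 2 + (p.2 - q.2) ^+ 2.

Definition cdisk (c : R * R) (r : R) (p : R * R) : Prop := sqdist p c <= r ^+ 2.
Definition odisk (c : R * R) (r : R) (p : R * R) : Prop := sqdist p c < r ^+ 2.

(* unit diameter disks: radius 1/2 *)
Definition rad : R := 1 / 2.

Definition lin (a1 a2 b : R) (p : R * R) : R := a1 * p.1 + a2 * p.2 - b.

(* A family of n unit-diameter disks, given by their centers c i, i < n. *)
Variable n : nat.
Implicit Type c : 'I_n -> R * R.

Definition is_packing c : Prop :=
  forall i j : 'I_n, i != j -> forall p, ~ (odisk (c i) rad p /\ odisk (c j) rad p).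

Definition totally_separable c (F : pred 'I_n) : Prop :=
  forall i j : 'I_n, F i -> F j -> i != j ->
  exists a1 a2 b : R, (a1, a2) != (0, 0) /\
    (forall k, F k -> forall p, odisk (c k) rad p -> lin a1 a2 b p != 0) /\
    (((forall p, cdisk (c i) rad p -> lin a1 a2 b p <= 0) /\
      (forall p, cdisk (c j) rad p -> lin a1 a2 b p >= 0)) \/
     ((forall p, cdisk (c i) rad p -> lin a1 a2 b p >= 0) /\
      (forall p, cdisk (c j) rad p -> lin a1 a2 b p <= 0))).

(* two (distinct) disks of radius 1/2 are tangent iff their centers are at distance 1 *)
Definition tangent c (i j : 'I_n) : bool := (i != j) && (sqdist (c i) (c j) == 1).

Definition TS_packing c : Prop := is_packing c /\ totally_separable c predT.

Definition LS_packing c : Prop :=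
  is_packing c /\
  forall i : 'I_n, totally_separable c (fun k => (k == i) || tangent c i k).

Definition contact_number c : nat :=
  #|[set ij : 'I_n * 'I_n | (ij.1 < ij.2)%N && tangent c ij.1 ij.2]|.

End Disks.

(* Main.v *)
Require Import Defs.
From HB Require Import structures.
From mathcomp Require Import all_boot all_order all_algebra.
From mathcomp Require Import reals.
From mathcomp Require Import ring lra zify.
Import Order.TTheory GRing.Theory Num.Theory.
Local Open Scope ring_scope.
Lemma key_tB (R : realType) (A B : R) :
  (forall t : R, t * B <= t ^+ 2 * A) -> B = 0.
Proof.
move=> H.
have h1 := H 1; have h2 := H (-1).
have hA : 0 <= A by lra.
have [A0|Apos] := eqVneq A 0.
  by move: h1 h2; rewrite A0; lra.
have Ap : 0 < A by rewrite lt_def Apos hA.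
have := H (B / (2 * A)).
have e : B / (2 * A) * A = B / 2 by field.
have -> : (B / (2 * A)) ^+ 2 * A = (B / (2 * A)) * (B / 2) by rewrite expr2 -mulrA e.
move=> h.
have h' : 0 <= (B / (2 * A)) * B by nra.
have : (B / (2 * A)) * B = (B * B) / (2 * A) by field.
move=> e2; rewrite e2 in h'.
have : 0 <= B * B by nra.
have : (B * B) / (2 * A) * (2 * A) = B * B by field.
nra.
Qed.

Lemma sep_core (R : realType) (x0 y0 u1 u2 d1 d2 a1 a2 b : R) :
  u1 ^+ 2 + u2 ^+ 2 = 1 -> d1 ^+ 2 + d2 ^+ 2 = 1 -> (a1 != 0) || (a2 != 0) ->
  (forall p1 p2, (p1 - x0) ^+ 2 + (p2 - y0) ^+ 2 <= 1 / 4 -> a1 * p1 + a2 * p2 - b <= 0) ->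
  (forall p1 p2, (p1 - (x0 + u1)) ^+ 2 + (p2 - (y0 + u2)) ^+ 2 <= 1 / 4 -> 0 <= a1 * p1 + a2 * p2 - b) ->
  (forall p1 p2, (p1 - (x0 + d1)) ^+ 2 + (p2 - (y0 + d2)) ^+ 2 < 1 / 4 -> a1 * p1 + a2 * p2 - b != 0) ->
  u1 * d1 + u2 * d2 <= 0 \/ (u1 = d1 /\ u2 = d2).
Proof.
move=> hu hd ha Hi Hj Hk.
have hm1 := Hi (x0 + u1 / 2) (y0 + u2 / 2).
have hm2 := Hj (x0 + u1 / 2) (y0 + u2 / 2).
have e1 : (x0 + u1 / 2 - x0) ^+ 2 + (y0 + u2 / 2 - y0) ^+ 2 = (u1 ^+ 2 + u2 ^+ 2) / 4 by field.
have e2 : (x0 + u1 / 2 - (x0 + u1)) ^+ 2 + (y0 + u2 / 2 - (y0 + u2)) ^+ 2 = (u1 ^+ 2 + u2 ^+ 2) / 4 by field.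
rewrite e1 hu lexx in hm1; rewrite e2 hu lexx in hm2.
have L0 : a1 * (x0 + u1 / 2) + a2 * (y0 + u2 / 2) - b = 0.
  by apply/eqP; rewrite eq_le hm1 //= hm2.
have HB : forall t : R, t * (a2 * u1 - a1 * u2) <= t ^+ 2 * (a1 * u1 + a2 * u2).
  move=> t.
  have tp : 0 < 1 + t ^+ 2 by nra.
  have tn : 1 + t ^+ 2 != 0 by rewrite gt_eqF.
  pose v1 := ((1 - t ^+ 2) * u1 - 2 * t * u2) / (2 * (1 + t ^+ 2)).
  pose v2 := ((1 - t ^+ 2) * u2 + 2 * t * u1) / (2 * (1 + t ^+ 2)).
  have := Hi (x0 + v1) (y0 + v2).
  have -> : (x0 + v1 - x0) ^+ 2 + (y0 + v2 - y0) ^+ 2 = (u1 ^+ 2 + u2 ^+ 2) / 4.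
    rewrite /v1 /v2; field; exact: tn.
  rewrite hu lexx => /(_ isT) h.
  have ev : (a1 * v1 + a2 * v2) * (2 * (1 + t ^+ 2))
      = (1 - t ^+ 2) * (a1 * u1 + a2 * u2) + 2 * t * (a2 * u1 - a1 * u2).
    rewrite /v1 /v2; field; exact: tn.
  have h2 : a1 * v1 + a2 * v2 <= (a1 * u1 + a2 * u2) / 2.
    have : a1 * (x0 + v1) + a2 * (y0 + v2) - b - (a1 * (x0 + u1 / 2) + a2 * (y0 + u2 / 2) - b)
       = a1 * v1 + a2 * v2 - (a1 * u1 + a2 * u2) / 2 by field.
    rewrite L0; lra.
  have h3 : (a1 * v1 + a2 * v2) * (2 * (1 + t ^+ 2)) <= (a1 * u1 + a2 * u2) / 2 * (2 * (1 + t ^+ 2)).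
    by rewrite ler_pM2r // mulr_gt0.
  rewrite ev in h3.
  have : (a1 * u1 + a2 * u2) / 2 * (2 * (1 + t ^+ 2)) = (a1 * u1 + a2 * u2) * (1 + t ^+ 2) by field.
  move=> e; rewrite e in h3.
  lra.
have B0 := @key_tB R _ _ HB.
have [A eA] : exists A, A = a1 * u1 + a2 * u2 by eexists.
have ea1 : a1 = A * u1.
  have : A * u1 - a1 = a1 * (u1 ^+ 2 + u2 ^+ 2 - 1) + u2 * (a2 * u1 - a1 * u2) by rewrite eA; ring.
  rewrite hu B0 subrr; lra.
have ea2 : a2 = A * u2.
  have : A * u2 - a2 = a2 * (u1 ^+ 2 + u2 ^+ 2 - 1) - u1 * (a2 * u1 - a1 * u2) by rewrite eA; ring.
  rewrite hu B0 subrr; lra.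
have An : A != 0.
  apply: contraTneq ha => A0; by rewrite ea1 ea2 A0 !mul0r eqxx.
have [s es] : exists s, s = u1 * d1 + u2 * d2 by eexists.
rewrite -es; have [sle|sgt] := lerP s 0; first by left.
have [sge|slt] := lerP 1 s.
  right.
  have : (u1 - d1) ^+ 2 + (u2 - d2) ^+ 2 = (u1 ^+ 2 + u2 ^+ 2) + (d1 ^+ 2 + d2 ^+ 2) - 2 * s by rewrite es; ring.
  rewrite hu hd => e.
  have q1 := sqr_ge0 (u1 - d1); have q2 := sqr_ge0 (u2 - d2).
  have z1 : (u1 - d1) ^+ 2 = 0 by lra.
  have z2 : (u2 - d2) ^+ 2 = 0 by lra.
  move/eqP: z1; move/eqP: z2; rewrite !sqrf_eq0 !subr_eq0 => /eqP -> /eqP ->; by [].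
exfalso.
pose p1 := x0 + d1 - (s - 1 / 2) * u1.
pose p2 := y0 + d2 - (s - 1 / 2) * u2.
have := Hk p1 p2.
have -> : (p1 - (x0 + d1)) ^+ 2 + (p2 - (y0 + d2)) ^+ 2 = (s - 1 / 2) ^+ 2 * (u1 ^+ 2 + u2 ^+ 2).
  by rewrite /p1 /p2; ring.
rewrite hu mulr1.
have -> : (s - 1 / 2) ^+ 2 < 1 / 4 by nra.
move=> /(_ isT); apply/negP; rewrite negbK.
have : a1 * p1 + a2 * p2 - b
   = (a1 * (x0 + u1 / 2) + a2 * (y0 + u2 / 2) - b)
     + A * (s - (s - 1/2) * (u1 ^+ 2 + u2 ^+ 2) - (u1 ^+ 2 + u2 ^+ 2) / 2).
  rewrite /p1 /p2 es ea1 ea2; ring.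
move=> ->; rewrite L0 hu; apply/eqP; ring.
Qed.
Set Implicit Arguments. Unset Strict Implicit.

Section Comb.
Variable R : realType.
Variable n : nat.
Variable c : 'I_n -> R * R.
Hypothesis LS : LS_packing c.

Lemma radE : (@Defs.rad R) ^+ 2 = 1 / 4.
Proof. by rewrite /Defs.rad expr2; field. Qed.

Lemma sqdistC (p q : R * R) : sqdist p q = sqdist q p.
Proof. by rewrite /sqdist; ring. Qed.

Lemma tangentC i j : tangent c i j = tangent c j i.
Proof. by rewrite /tangent eq_sym sqdistC. Qed.

Lemma center_inj i j : c i = c j -> i = j.
Proof.
case: LS => Hp _ e; apply/eqP; apply: contraT => ne; exfalso.
apply: (Hp i j ne (c i)); rewrite /odisk -e /sqdist !subrr expr2 mul0r addr0 radE.
by split; lra.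
Qed.

Lemma addsubE (x y : R) : x + (y - x) = y.
Proof. by rewrite addrC subrK. Qed.

Lemma LS_dot i j k : tangent c i j -> tangent c i k -> j != k ->
  ((c j).1 - (c i).1) * ((c k).1 - (c i).1) + ((c j).2 - (c i).2) * ((c k).2 - (c i).2) <= 0.
Proof.
move=> tij tik njk.
case: LS => _ /(_ i) TS.
have Fi : (i == i) || tangent c i i by rewrite eqxx.
have Fj : (j == i) || tangent c i j by rewrite tij orbT.
have Fk : (k == i) || tangent c i k by rewrite tik orbT.
have nij : i != j by case/andP: tij.
have [a1 [a2 [b [nz [Hk Hs]]]]] := TS i j Fi Fj nij.
have Hk' := Hk k Fk.
rewrite xpair_eqE negb_and in nz.
have hu : ((c j).1 - (c i).1) ^+ 2 + ((c j).2 - (c i).2) ^+ 2 = 1.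
  by move: tij; rewrite tangentC => /andP [_ /eqP].
have hd : ((c k).1 - (c i).1) ^+ 2 + ((c k).2 - (c i).2) ^+ 2 = 1.
  by move: tik; rewrite tangentC => /andP [_ /eqP].
suff : ((c j).1 - (c i).1) * ((c k).1 - (c i).1) + ((c j).2 - (c i).2) * ((c k).2 - (c i).2) <= 0
   \/ ((c j).1 - (c i).1 = (c k).1 - (c i).1 /\ (c j).2 - (c i).2 = (c k).2 - (c i).2).
  case=> // [[e1 e2]]; exfalso.
  have e1' : (c j).1 = (c k).1 by lra.
  have e2' : (c j).2 = (c k).2 by lra.
  have : c j = c k by rewrite [c j]surjective_pairing [c k]surjective_pairing e1' e2'.
  by move/center_inj => ejk; rewrite ejk eqxx in njk.
case: Hs => [[Hi Hj]|[Hi Hj]].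
- apply: (@sep_core R (c i).1 (c i).2 _ _ _ _ a1 a2 b hu hd nz).
  + move=> p1 p2 h; apply: (Hi (p1, p2)); by rewrite /cdisk /sqdist radE.
  + move=> p1 p2; rewrite !addsubE => h; apply: (Hj (p1, p2)); by rewrite /cdisk /sqdist radE.
  + move=> p1 p2; rewrite !addsubE => h; apply: (Hk' (p1, p2)); by rewrite /odisk /sqdist radE.
- have nz' : (- a1 != 0) || (- a2 != 0) by rewrite !oppr_eq0.
  apply: (@sep_core R (c i).1 (c i).2 _ _ _ _ (- a1) (- a2) (- b) hu hd nz').
  + move=> p1 p2 h; have := Hi (p1, p2); rewrite /cdisk /sqdist radE /lin /= => /(_ h); lra.
  + move=> p1 p2; rewrite !addsubE => h; have := Hj (p1, p2); rewrite /cdisk /sqdist radE /lin /= => /(_ h); lra.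
  + move=> p1 p2; rewrite !addsubE => h; have := Hk' (p1, p2); rewrite /odisk /sqdist radE /lin /= => /(_ h).
    apply: contra => /eqP e; apply/eqP; lra.
Qed.


Definition nb (Q : R -> R -> bool) (i j : 'I_n) : bool :=
  tangent c i j && Q ((c j).1 - (c i).1) ((c j).2 - (c i).2).

Section Gen.
Variable Q : R -> R -> bool.
Variables l1 l2 : R.
Hypothesis Qdot : forall x y x' y', Q x y -> Q x' y' -> 0 < x * x' + y * y'.
Hypothesis Qpos : forall x y, Q x y -> 0 < l1 * x + l2 * y.
Definition K (x y : R) : Prop := Q x y \/ (x = 0 /\ y = 0).
Hypothesis HK : forall x y x' y', K x y -> K x' y' -> K (x + x') (y + y').

Lemma nb_succ i j k : nb Q i j -> nb Q i k -> j = k.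
Proof.
move=> /andP [tij qj] /andP [tik qk]; apply/eqP; apply: contraT => njk; exfalso.
have := LS_dot tij tik njk; have := Qdot qj qk; lra.
Qed.

Lemma nb_pred i k j : nb Q i j -> nb Q k j -> i = k.
Proof.
move=> /andP [tij qi] /andP [tkj qk]; apply/eqP; apply: contraT => nik; exfalso.
rewrite tangentC in tij; rewrite tangentC in tkj.
have := LS_dot tij tkj nik; have := Qdot qi qk.
have -> : ((c i).1 - (c j).1) * ((c k).1 - (c j).1) + ((c i).2 - (c j).2) * ((c k).2 - (c j).2)
  = ((c j).1 - (c i).1) * ((c j).1 - (c k).1) + ((c j).2 - (c i).2) * ((c j).2 - (c k).2) by ring.
lra.
Qed.

Definition succ (u : 'I_n) : 'I_n := odflt u [pick v | nb Q u v].

Lemma succ_nb u v : nb Q u v -> succ u = v.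
Proof.
rewrite /succ => huv; case: pickP => [w hw|h] /=; first exact: nb_succ hw huv.
by rewrite h in huv.
Qed.

Lemma succ_cases u : succ u = u \/ nb Q u (succ u).
Proof. rewrite /succ; case: pickP => [w hw|h] /=; by [right|left]. Qed.

Lemma iter_K k v : K ((c (iter k succ v)).1 - (c v).1) ((c (iter k succ v)).2 - (c v).2).
Proof.
elim: k => [|k IH] /=.
  by right; rewrite !subrr.
set w := iter k succ v.
have -> : (c (succ w)).1 - (c v).1 = ((c (succ w)).1 - (c w).1) + ((c w).1 - (c v).1) by ring.
have -> : (c (succ w)).2 - (c v).2 = ((c (succ w)).2 - (c w).2) + ((c w).2 - (c v).2) by ring.
apply: HK IH; case: (succ_cases w) => [->|/andP [_ h]]; last by left.
by right; rewrite !subrr.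
Qed.

Definition nolft (a : 'I_n) : bool := [forall u, ~~ nb Q u a].

Definition lv (v : 'I_n) : R := l1 * (c v).1 + l2 * (c v).2.

Lemma exists_start v : exists a, nolft a && fconnect succ a v.
Proof.
suff : forall m v, (#|[set u | (lv u < lv v)%R]| < m)%N -> exists a, nolft a && fconnect succ a v.
  by move/(_ _ v (ltnSn _)).
elim=> [//|m IH] {}v hm.
case hv: (nolft v); first by exists v; rewrite hv connect0.
move/negbT: hv; rewrite /nolft negb_forall => /existsP [u]; rewrite negbK => huv.
have luv : lv u < lv v.
  have := Qpos (proj2 (andP huv)); rewrite /lv.
  have -> : l1 * ((c v).1 - (c u).1) + l2 * ((c v).2 - (c u).2)
       = (l1 * (c v).1 + l2 * (c v).2) - (l1 * (c u).1 + l2 * (c u).2) by ring.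
  by rewrite subr_gt0.
have hpr : [set w | lv w < lv u] \proper [set w | lv w < lv v].
  apply/properP; split.
    by apply/subsetP => w; rewrite !inE => h; exact: lt_trans h luv.
  by exists u; rewrite !inE ?ltxx.
have := proper_card hpr => hlt.
have [a /andP [ha hau]] := IH u (leq_trans hlt (ltnSE hm)).
exists a; apply/andP; split; first exact: ha.
apply: connect_trans hau (connect1 _).
by rewrite /frel /= (succ_nb huv).
Qed.

Definition st (v : 'I_n) : 'I_n := odflt v [pick a | nolft a && fconnect succ a v].

Lemma st_spec v : nolft (st v) && fconnect succ (st v) v.
Proof.
rewrite /st; case: pickP => [a ha|h] //=.
by have [a ha] := exists_start v; rewrite h in ha.
Qed.

Lemma same_start v w : st v = st w ->
  K ((c w).1 - (c v).1) ((c w).2 - (c v).2) \/ K ((c v).1 - (c w).1) ((c v).2 - (c w).2).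
Proof.
move=> e.
have /andP [_ cv] := st_spec v; have /andP [_ cw] := st_spec w.
rewrite e in cv.
have ev := iter_findex cv; have ew := iter_findex cw.
set k := findex succ (st w) v in ev; set l := findex succ (st w) w in ew.
have [kl|lk] := leqP k l.
  left; have : iter (l - k) succ v = w by rewrite -ev -iterD subnK.
  by move=> <-; apply: iter_K.
right; have : iter (k - l) succ w = v by rewrite -ew -iterD subnK // ltnW.
by move=> <-; apply: iter_K.
Qed.

Lemma card_nb : (#|[set ij : 'I_n * 'I_n | nb Q ij.1 ij.2]| + #|[set a | nolft a]| <= n)%N.
Proof.
set S := [set ij : 'I_n * 'I_n | nb Q ij.1 ij.2].
have inj : {in S &, injective (fun ij : 'I_n * 'I_n => ij.2)}.
  move=> [i j] [i' j'] ; rewrite !inE /= => h h' ejj; rewrite -ejj in h'.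
  by rewrite (nb_pred h h') ejj.
rewrite -(card_in_imset inj).
have sub : [set ij.2 | ij in S] \subset ~: [set a | nolft a].
  apply/subsetP => x /imsetP [[i j] hij ->]; rewrite !inE /= /nolft negb_forall.
  by apply/existsP; exists i; rewrite negbK; rewrite inE in hij.
have := subset_leq_card sub.
have := cardsC [set a | nolft a]; rewrite card_ord => hc.
by move=> h; rewrite -[X in (_ + _ <= X)%N]hc addnC leq_add2l.
Qed.

End Gen.

Definition Q0 (x y : R) : bool := (y < x) && (- x <= y).
Definition Q1 (x y : R) : bool := (x <= y) && (- x < y).

Lemma Q0dot x y x' y' : Q0 x y -> Q0 x' y' -> 0 < x * x' + y * y'.
Proof. move=> /andP [h1 h2] /andP [h3 h4]; nra. Qed.
Lemma Q1dot x y x' y' : Q1 x y -> Q1 x' y' -> 0 < x * x' + y * y'.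
Proof. move=> /andP [h1 h2] /andP [h3 h4]; nra. Qed.
Lemma Q0pos x y : Q0 x y -> 0 < 1 * x + 0 * y.
Proof. move=> /andP [h1 h2]; lra. Qed.
Lemma Q1pos x y : Q1 x y -> 0 < 0 * x + 1 * y.
Proof. move=> /andP [h1 h2]; lra. Qed.
Lemma HK0 x y x' y' : K Q0 x y -> K Q0 x' y' -> K Q0 (x + x') (y + y').
Proof.
rewrite /K /Q0.
move=> [/andP [h1 h2]|[-> ->]] [/andP [h3 h4]|[-> ->]]; rewrite ?addr0 ?add0r;
  try by [left; apply/andP; split|right].
left; apply/andP; split; lra.
Qed.
Lemma HK1 x y x' y' : K Q1 x y -> K Q1 x' y' -> K Q1 (x + x') (y + y').
Proof.
rewrite /K /Q1.
move=> [/andP [h1 h2]|[-> ->]] [/andP [h3 h4]|[-> ->]]; rewrite ?addr0 ?add0r;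
  try by [left; apply/andP; split|right].
left; apply/andP; split; lra.
Qed.

Lemma cross (a b a' b' : R) :
  (K Q0 (a' - a) (b' - b) \/ K Q0 (a - a') (b - b')) ->
  (K Q1 (a' - a) (b' - b) \/ K Q1 (a - a') (b - b')) -> a = a' /\ b = b'.
Proof.
rewrite /K /Q0 /Q1.
move=> [[/andP [h1 h2]|[h1 h2]]|[/andP [h1 h2]|[h1 h2]]]
       [[/andP [h3 h4]|[h3 h4]]|[/andP [h3 h4]|[h3 h4]]]; split; lra.
Qed.

Lemma cover x y : ~~ Q0 x y -> ~~ Q1 x y -> x ^+ 2 + y ^+ 2 = 1 -> Q0 (- x) (- y) || Q1 (- x) (- y).
Proof.
rewrite /Q0 /Q1 !negb_and -!ltNge -!leNgt => h0 h1 h2.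
case: (ltrP y x) => yx.
  case/orP: h0 => [h|h]; first lra.
  apply/orP; right; apply/andP; split; lra.
case/orP: h1 => [h|h]; first lra.
have [xy|xy] := eqVneq x y.
  apply/orP; right; apply/andP; split; rewrite -?xy; first lra.
  have : x <> 0 by move=> x0; move: h2; rewrite -xy x0 expr2 mul0r addr0; lra.
  lra.
apply/orP; left; apply/andP; split.
  have : x < y by rewrite lt_def eq_sym xy yx.
  lra.
lra.
Qed.

Lemma contact_le :
  (contact_number c <= #|[set ij : 'I_n * 'I_n | nb Q0 ij.1 ij.2]|
                      + #|[set ij : 'I_n * 'I_n | nb Q1 ij.1 ij.2]|)%N.
Proof.
rewrite /contact_number.
set S := [set ij : 'I_n * 'I_n | (ij.1 < ij.2)%N && tangent c ij.1 ij.2].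
pose cnd (ij : 'I_n * 'I_n) := Q0 ((c ij.2).1 - (c ij.1).1) ((c ij.2).2 - (c ij.1).2)
                            || Q1 ((c ij.2).1 - (c ij.1).1) ((c ij.2).2 - (c ij.1).2).
pose g (ij : 'I_n * 'I_n) := if cnd ij then ij else (ij.2, ij.1).
have inj : {in S &, injective g}.
  move=> [i j] [i' j']; rewrite !inE /g /= => /andP [l1 _] /andP [l2 _].
  case: ifP => _; case: ifP => _ // [] e1 e2; subst; try done.
  - by have := ltn_trans l1 l2; rewrite ltnn.
  - by have := ltn_trans l1 l2; rewrite ltnn.
rewrite -(card_in_imset inj).
have sub : [set g ij | ij in S] \subset
   [set ij : 'I_n * 'I_n | nb Q0 ij.1 ij.2] :|: [set ij : 'I_n * 'I_n | nb Q1 ij.1 ij.2].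
  apply/subsetP => x /imsetP [[i j] hij ->]; rewrite inE /= in hij.
  case/andP: hij => _ tij.
  rewrite /g; case: ifP => hc; rewrite !inE /nb /=.
    by rewrite tij /=; rewrite /cnd /= in hc.
  rewrite tangentC tij /=.
  have hd : ((c j).1 - (c i).1) ^+ 2 + ((c j).2 - (c i).2) ^+ 2 = 1.
    by move: tij; rewrite tangentC => /andP [_ /eqP].
  move/negbT: hc; rewrite /cnd /= negb_or => /andP [h0 h1].
  by have := cover h0 h1 hd; rewrite !opprB.
apply: leq_trans (subset_leq_card sub) _.
by rewrite -cardsUI leq_addr.
Qed.

Lemma n_le :
  (n <= #|[set a | nolft Q0 a]| * #|[set a | nolft Q1 a]|)%N.
Proof.
pose F (v : 'I_n) := (st Q0 v, st Q1 v).
have inj : injective F.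
  move=> v w [] e0 e1.
  have k0 := same_start Q0dot Q0pos HK0 e0.
  have k1 := same_start Q1dot Q1pos HK1 e1.
  have [ex ey] := cross k0 k1.
  apply: center_inj.
  by rewrite [c v]surjective_pairing [c w]surjective_pairing ex ey.
have sub : [set F v | v in [set: 'I_n]] \subset setX [set a | nolft Q0 a] [set a | nolft Q1 a].
  apply/subsetP => x /imsetP [v _ ->]; rewrite !inE /=.
  have /andP [-> _] := st_spec Q0dot Q0pos v.
  by have /andP [-> _] := st_spec Q1dot Q1pos v.
have := subset_leq_card sub; rewrite cardsX (card_imset _ inj) cardsT card_ord //.
Qed.

Lemma nat_bounds : exists a b : nat,
  [/\ (contact_number c + a + b <= 2 * n)%N & (n <= a * b)%N].
Proof.
exists #|[set a | nolft Q0 a]|, #|[set a | nolft Q1 a]|; split; last exact: n_le.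
have h0 := card_nb Q0dot.
have h1 := card_nb Q1dot.
have hc := contact_le.
move: h0 h1 hc; lia.
Qed.

End Comb.
Unset Implicit Arguments. Set Strict Implicit.
Theorem theorem2 (R : realType) (n : nat) (c : 'I_n -> R * R) :
  (1 < n)%N -> LS_packing c ->
  ((contact_number c)%:Z <= Num.floor (2 * n%:R - 2 * Num.sqrt (n%:R : R)))%R.
Proof.
move=> n1 LS.
have [a [b [h1 h2]]] := nat_bounds LS.
rewrite floor_ge_int.
have -> : ((contact_number c)%:Z%:~R : R) = (contact_number c)%:R by [].
have r1 : (contact_number c)%:R + a%:R + b%:R <= 2 * (n%:R : R).
  by rewrite -!natrD -[2 : R]/(2%:R) -natrM ler_nat.
have r2 : (n%:R : R) <= a%:R * b%:R by rewrite -natrM ler_nat.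
have s0 := sqrtr_ge0 (n%:R : R).
have s2 : Num.sqrt (n%:R : R) ^+ 2 = n%:R by rewrite sqr_sqrtr // ler0n.
have a0 : (0 : R) <= a%:R by rewrite ler0n.
have b0 : (0 : R) <= b%:R by rewrite ler0n.
have ab : 2 * Num.sqrt (n%:R : R) <= a%:R + b%:R.
  have hsq : (2 * Num.sqrt (n%:R : R)) ^+ 2 <= (a%:R + b%:R) ^+ 2.
    have := sqr_ge0 ((a%:R : R) - b%:R).
    rewrite exprMn s2; nra.
  rewrite -ler_sqr ?nnegrE //; last by rewrite addr_ge0.
  by rewrite mulr_ge0.
lra.
Qed.
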